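(* Let $1\le D\le K-1$ and let $\mathbf{L}$ be the $(K,D)$ AIR matrix. Let $i\in[0:\lceil l/2\rceil]$, let $k\in C_i$, and let $k_R=k-(K-D-\lambda_{2i-1})$. If $\lambda_{2i}>0$, write $k_R=c\lambda_{2i}+d$ with integers $c\ge0$ and $0\le d<\lambda_{2i}$; then the down-distance of $\mathbf{L}(k,k)$ is $$d_{down}(k)=D+\lambda_{2i+1}+(\beta_{2i}-1-c)\lambda_{2i}.$$ If $\lambda_{2i}=0$ (which happens exactly when $l$ is odd and $i=\lceil l/2\rceil$), then $d_{down}(k)=D$.
   Context: Notation: $[a:b]=\{a,\dots,b\}$. Let $K,D$ be integers with $1\le D\le K-1$. Define $\lambda_{-1}=K-D$, $\lambda_0=D$ and recursively, by Euclidean division, $\lambda_{i-1}=\beta_i\lambda_i+\lambda_{i+1}$ with $0\le\lambda_{i+1}<\lambda_i$, for $i=0,1,2,\dots$, stopping at the index $l\ge 0$ with $\lambda_{l+1}=0$; $\beta_0\ge0$ may be $0$, $\beta_i\ge1$ for $i\ge1$. Set $\lambda_j=0$ and $\beta_j=0$ for $j>l$. For $n\mid m$, $\mathbf{I}_{m\times n}$ is $m/n$ copies of the $n\times n$ identity stacked vertically and $\mathbf{I}_{n\times m}$ its transpose. The $(K,D)$ AIR matrix $\mathbf{L}$ is the $K\times(K-D)$ $0/1$ matrix (rows $[0:K-1]$, columns $[0:K-D-1]$) that is zero except in the blocks: the $(K-D)\times(K-D)$ identity in rows and columns $[0:K-D-1]$; for $0\le 2i\le l$, the even submatrix $\mathbf{I}_{\lambda_{2i}\times\beta_{2i}\lambda_{2i}}$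 in rows $[K-\lambda_{2i}:K-1]$, columns $[K-D-\lambda_{2i-1}:K-D-\lambda_{2i+1}-1]$ (absent if $i=0,\beta_0=0$); for $1\le 2i+1\le l$, the odd submatrix $\mathbf{I}_{\beta_{2i+1}\lambda_{2i+1}\times\lambda_{2i+1}}$ in rows $[K-\lambda_{2i}:K-\lambda_{2i+2}-1]$, columns $[K-D-\lambda_{2i+1}:K-D-1]$. Column intervals: $C_i=[K-D-\lambda_{2i-1}:K-D-\lambda_{2i+1}-1]$, $0\le i\le\lceil l/2\rceil$. Down-distance: for $k\in[0:K-D-1]$ (where $\mathbf{L}(k,k)=1$), let $k'$ be the largest row index with $k'>k$ and $\mathbf{L}(k',k)=1$; then $d_{down}(k)=k'-k$. *)

(* Defs.v *)
From mathcomp Require Import all_boot all_order all_algebra.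
Set Implicit Arguments. Unset Strict Implicit. Unset Printing Implicit Defensive.

(* Euclidean-division sequence.  State n = (lambda_{n-1}, lambda_n), n >= 0.
   Once a zero is reached, the sequence stays 0 (convention lambda_j = 0, j > l). *)
Definition air_step (p : nat * nat) : nat * nat :=
  if p.2 == 0 then (0, 0) else (p.2, p.1 %% p.2).

Definition air_state (K D n : nat) : nat * nat := iter n air_step (K - D, D).

(* lamS K D n = lambda_{n-1}   (so lamS K D 0 = lambda_{-1} = K - D,
   lamS K D 1 = lambda_0 = D, ...) *)
Definition lamS (K D n : nat) : nat := (air_state K D n).1.

(* beta K D i = beta_i  (i >= 0): lambda_{i-1} = beta_i lambda_i + lambda_{i+1};
   beta_i = 0 when lambda_i = 0. *)
Definition beta (K D i : nat) : nat :=
  if lamS K D i.+1 == 0 then 0 else lamS K D i %/ lamS K D i.+1.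

(* l = least index j >= 0 with lambda_{j+1} = 0 (exists and is < K when 1 <= D <= K-1). *)
Definition air_l (K D : nat) : nat :=
  find (fun j => lamS K D j.+2 == 0) (iota 0 K).

Definition air_entry (K D r c : nat) : bool :=
  let l := air_l K D in
  [||
      (r < K - D) && (c == r),
      (* even submatrices I_{lambda_{2i} x beta_{2i} lambda_{2i}} *)
      has (fun i =>
        [&& 2 * i <= l, 0 < beta K D (2 * i),
            K - lamS K D (2 * i).+1 <= r, r < K,
            K - D - lamS K D (2 * i) <= c, c < K - D - lamS K D (2 * i).+2 &
            (c - (K - D - lamS K D (2 * i))) %% lamS K D (2 * i).+1
              == r - (K - lamS K D (2 * i).+1)]) (iota 0 l.+1)
    | (* odd submatrices I_{beta_{2i+1} lambda_{2i+1} x lambda_{2i+1}} *)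
      has (fun i =>
        [&& (2 * i).+1 <= l,
            K - lamS K D (2 * i).+1 <= r, r < K - lamS K D (2 * i).+3,
            K - D - lamS K D (2 * i).+2 <= c, c < K - D &
            (r - (K - lamS K D (2 * i).+1)) %% lamS K D (2 * i).+2
              == c - (K - D - lamS K D (2 * i).+2)]) (iota 0 l.+1) ].

Definition air_mx (K D : nat) : 'M[nat]_(K, K - D) :=
  \matrix_(r < K, c < K - D) nat_of_bool (air_entry K D r c).

Definition d_down (m n : nat) (L : 'M[nat]_(m, n)) (k : 'I_n) : nat :=
  (\max_(r < m | (k < r) && (L r k == 1)) r) - k.

(* Main.v *)
Require Import Defs.
From mathcomp Require Import all_boot all_order all_algebra.
From mathcomp Require Import ssrint.
From mathcomp Require Import zify.
Import GRing.Theory Num.Theory.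

Section Lam.
Variables K D : nat.
Local Notation lam := (lamS K D).

Lemma st_S n : air_state K D n.+1 = air_step (air_state K D n).
Proof. by []. Qed.

Lemma lam_succ n : (air_state K D n).2 = lam n.+1.
Proof.
rewrite /lamS st_S /air_step; case: ifP => [/eqP -> //|_ //].
Qed.

Lemma st_eq n : air_state K D n = (lam n, lam n.+1).
Proof. by rewrite -lam_succ /lamS; case: (air_state K D n). Qed.

Lemma lamSS n : lam n.+2 = if lam n.+1 == 0 then 0 else lam n %% lam n.+1.
Proof.
rewrite -lam_succ st_S (st_eq n) /air_step /=.
by case: ifP.
Qed.

Lemma lam0 : lam 0 = K - D. Proof. by []. Qed.
Lemma lam1 : lam 1 = D. Proof. by rewrite -lam_succ. Qed.

Lemma lam_le2 n : lam n.+2 <= lam n.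
Proof. rewrite lamSS; case: ifP => // _; exact: leq_mod. Qed.

Lemma lam_le21 n : lam n.+2 <= lam n.+1.
Proof.
rewrite lamSS; case: ifP => // /negbT; rewrite -lt0n => h.
exact: ltnW (ltn_pmod _ h).
Qed.

Lemma lam_lt21 n : 0 < lam n.+1 -> lam n.+2 < lam n.+1.
Proof.
move=> h; rewrite lamSS; case: ifP => [/eqP e|_]; first by rewrite e in h.
exact: ltn_pmod.
Qed.

Lemma lam_mono n j : lam (n + 2 * j) <= lam n.
Proof.
elim: j => [|j IH]; first by rewrite muln0 addn0.
have -> : n + 2 * j.+1 = (n + 2 * j).+2 by lia.
exact: leq_trans (lam_le2 _) IH.
Qed.

Lemma monoP n m j : m = n + 2 * j -> lam m <= lam n.
Proof. by move=> ->; apply: lam_mono. Qed.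

Lemma lam_bound n : lam n.+1 <= D - n.
Proof.
elim: n => [|n IH]; first by rewrite lam1 subn0.
case: (posnP (lam n.+1)) => h.
  by rewrite lamSS h.
have := lam_lt21 n h; lia.
Qed.

Lemma lam_zero n m : n <= m -> lam n.+1 = 0 -> lam m.+1 = 0.
Proof.
move=> nm; rewrite -(subnKC nm); elim: (m - n) => [|t IH]; first by rewrite addn0.
move=> h; rewrite addnS lamSS IH //.
Qed.

Hypothesis hD1 : 1 <= D.
Hypothesis hDK : D <= K - 1.

Lemma l_facts : air_l K D < K /\ lam (air_l K D).+2 = 0 /\
  forall m, m <= (air_l K D).+1 -> 0 < lam m.
Proof.
have hex : has (fun j => lam j.+2 == 0) (iota 0 K).
  apply/hasP; exists D.-1; first by rewrite mem_iota; lia.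
  have := lam_bound D; rewrite -[D.-1.+2]/(D.-1.+1.+1) prednK //; lia.
have hl : air_l K D < K by rewrite /air_l -[K in _ < K](size_iota 0) -has_find.
split => //; split.
  have := nth_find 0 hex; rewrite -/(air_l K D) nth_iota // add0n.
  by move/eqP.
move=> [|[|m]] hm; first by rewrite lam0; lia.
  by rewrite lam1.
have := @before_find _ 0 (fun j => lam j.+2 == 0) (iota 0 K) m; rewrite -/(air_l K D) => /(_ hm).
rewrite nth_iota ?add0n; last by lia.
by move/negbT; rewrite lt0n.
Qed.

End Lam.

Lemma max_eq (m : nat) (P : pred 'I_m) (r0 : 'I_m) :
  P r0 -> (forall r : 'I_m, P r -> r <= r0) -> \max_(r < m | P r) r = r0.
Proof.
move=> h1 h2; apply/eqP; rewrite eqn_leq; apply/andP; split.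
  by apply/bigmax_leqP.
exact: (@leq_bigmax_cond _ P (fun r : 'I_m => nat_of_ord r) r0 h1).
Qed.

Lemma ddown_char K D (k : 'I_(K - D)) r0 : r0 < K -> k < r0 ->
  air_entry K D r0 k ->
  (forall r, r < K -> k < r -> air_entry K D r k -> r <= r0) ->
  d_down (air_mx K D) k = r0 - k.
Proof.
move=> hr0 hk he hub; rewrite /d_down.
rewrite (@max_eq K _ (Ordinal hr0)) //=.
  by rewrite mxE hk /=; case: (air_entry _ _ _ _) he.
move=> r /andP [kr]; rewrite mxE => hr.
apply: hub; [exact: ltn_ord | exact: kr | ].
by case: (air_entry _ _ _ _) hr.
Qed.

Theorem lemma1 (K D : nat) (hD1 : 1 <= D) (hDK : D <= K - 1)
  (i : nat) (hi : i <= uphalf (air_l K D))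
  (k : 'I_(K - D))
  (hk1 : K - D - lamS K D (2 * i) <= k)
  (hk2 : k < K - D - lamS K D (2 * i).+2) :
  let kR := (k - (K - D - lamS K D (2 * i)))%N in
  (0 < lamS K D (2 * i).+1 ->
     forall c d : nat, kR = (c * lamS K D (2 * i).+1 + d)%N ->
       d < lamS K D (2 * i).+1 ->
       ((d_down (air_mx K D) k)%:Z =
         D%:Z + (lamS K D (2 * i).+2)%:Z
          + ((beta K D (2 * i))%:Z - 1 - c%:Z) * (lamS K D (2 * i).+1)%:Z)%R)
  /\ (lamS K D (2 * i).+1 = 0 -> d_down (air_mx K D) k = D)
  /\ (lamS K D (2 * i).+1 = 0 <-> odd (air_l K D) /\ i = uphalf (air_l K D)).
Proof.
cbv zeta.
have hKD : 0 < K - D by lia.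
have kK : k < K - D := ltn_ord k.
have [hlK [hl0 hlpos]] := l_facts K D hD1 hDK.
set l := air_l K D in hi hlK hl0 hlpos *.
have eh := odd_double_half l; rewrite -muln2 in eh.
have h2i : 2 * i <= l.+1.
  by move: hi eh; rewrite uphalf_half; case: (odd l) => /=; lia.
have hz : lamS K D (2*i).+1 = 0 <-> 2 * i = l.+1.
  split => [h|h].
    case: (ltnP (2*i) l.+1) => h'; last by lia.
    by have := hlpos (2*i).+1 h'; rewrite h.
  by rewrite h.
have hthird : lamS K D (2*i).+1 = 0 <-> odd l /\ i = uphalf l.
  rewrite hz uphalf_half; move: eh; case: (odd l) => /= eh.
    by split; [move=> h; split => //; lia | case => _ h; lia].
  by split; [move=> h; exfalso; lia | case].
case: (posnP (lamS K D (2*i).+1)) => hm0.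
  split; first by rewrite hm0.
  split; last exact: hthird.
  move=> _.
  have e2 : 2*i = l.+1 by apply/hz.
  destruct i as [|j]; first by lia.
  have e3 : 2 * j.+1 = (2*j).+2 by lia.
  rewrite e3 in hk1 hk2 hm0 e2 *.
  set M := lamS K D (2*j).+2 in hk1 hk2 *.
  set P := lamS K D (2*j).+1.
  have hl' : l = (2*j).+1 by lia.
  have hM : 0 < M by apply: hlpos; lia.
  have hP : 0 < P by apply: hlpos; lia.
  have hMP : M < P := lam_lt21 K D (2*j) hP.
  have h4 : lamS K D (2*j).+4 = 0 by rewrite lamSS hm0 eqxx.
  have Mn0 : (M == 0) = false by rewrite eqn0Ngt hM.
  have hPmod : P %% M = 0.
    by have := lamSS K D (2*j).+1; rewrite hm0 -/M -/P Mn0 => ->.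
  have [q hq] : exists q, P = q.+1 * M.
    exists (P %/ M).-1; rewrite prednK; last by rewrite divn_gt0 // ltnW.
    by rewrite {1}(divn_eq P M) hPmod addn0.
  have hMK : M <= K - D by have := monoP K D 0 (2*j).+2 j.+1 ltac:(lia); rewrite lam0.
  have hPD : P <= D by have := monoP K D 1 (2*j).+1 j ltac:(lia); rewrite lam1.
  rewrite h4 in hk2.
  set co := k - (K - D - M).
  have hco : co < M by lia.
  have -> : d_down (air_mx K D) k = K - M + co - k; last by lia.
  apply: ddown_char; [lia | lia | |].
    rewrite /air_entry; cbv zeta; rewrite -/l.
    apply/orP; right; apply/orP; right.
    apply/hasP; exists j; first by rewrite mem_iota; lia.
    rewrite -/M -/P hm0.
    apply/and4P; split; [lia | lia | lia |].
    apply/and3P; split; [lia | lia | apply/eqP].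
    rewrite -/co (_ : K - M + co - (K - P) = q * M + co); last by lia.
    by rewrite modnMDl modn_small.
  move=> r rK kr; rewrite /air_entry; cbv zeta; rewrite -/l.
  case/orP => [/andP [_ /eqP ee]|/orP [|]]; first by clear -ee kr; lia.
    case/hasP => i' _ /and4P [h1 h2 h3 /and4P [h4' h5 h6 h7]].
    case: (leqP i' j) => hij; last by clear -h1 hl' hij; lia.
    have := monoP K D ((2*i').+2) ((2*j).+2) (j - i') ltac:(clear -hij; lia).
    rewrite -/M => H; clear -H h6 hk1; lia.
  case/hasP => i' _ /and4P [h1 h2 h3 /and3P [h4' h5 /eqP h6]].
  case: (ltngtP i' j) => hij; last 2 first.
  - by clear -h1 hl' hij; lia.
  - subst i'.
    rewrite -/P -/M hm0 -/co in h2 h3 h6.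
    have ht : r - (K - P) < P by clear -h2 h3 hPD hDK; lia.
    have htq : (r - (K - P)) %/ M <= q.
      by rewrite -ltnS ltn_divLR // -hq.
    have htd := divn_eq (r - (K - P)) M.
    rewrite h6 in htd.
    have H := leq_mul htq (leqnn M).
    move: htd H; move: ((r - (K - P)) %/ M * M) => X htd H.
    clear -htd H hq h2 hPD hDK hMP; lia.
  have := monoP K D (2*i').+3 (2*j).+1 (j - i'.+1) ltac:(clear -hij; lia).
  rewrite -/P => H; clear -H h3 hMP; lia.
split; last split; [ | by move=> ee; rewrite ee in hm0 | exact: hthird].
move=> _ c d hkR hd.
have h2il : 2 * i <= l.
  case: (ltnP l (2*i)) => h //.
  have : 2*i = l.+1 by clear -h h2i; lia.
  by move/hz => h0; rewrite h0 in hm0.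
set m := lamS K D (2*i).+1 in hm0 hkR hd *.
set e := lamS K D (2*i) in hk1 hkR *.
set p := lamS K D (2*i).+2 in hk2 *.
have mn0 : (m == 0) = false by rewrite eqn0Ngt hm0.
have hpe : p < e by clear -hk1 hk2; lia.
have hpm : p = e %% m by have := lamSS K D (2*i); rewrite -/m -/e -/p mn0.
have hme : m <= e.
  rewrite leqNgt; apply/negP => h.
  by move: hpm; rewrite modn_small // => h'; clear -h' hpe; lia.
have hb : beta K D (2*i) = e %/ m by rewrite /beta -/m -/e mn0.
have hdiv : e = beta K D (2*i) * m + p.
  by rewrite hb hpm -divn_eq.
have hbpos : 0 < beta K D (2*i) by rewrite hb divn_gt0.
have hmD : m <= D by have := monoP K D 1 (2*i).+1 i ltac:(clear; lia); rewrite lam1.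
move: hdiv hbpos; set b := beta K D (2*i) => hdiv hbpos.
have -> : d_down (air_mx K D) k = K - m + d - k.
  apply: ddown_char; [clear -hd hmD hDK; lia | clear -kK hmD; lia | |].
    rewrite /air_entry; cbv zeta; rewrite -/l.
    apply/orP; right; apply/orP; left.
    apply/hasP; exists i; first by rewrite mem_iota; clear -h2il; lia.
    rewrite -/m -/e -/p -/b.
    apply/and4P; split; [done | done | clear -hd hmD hDK; lia |].
    apply/and4P; split; [clear -hd hmD hDK; lia | done | done | apply/eqP].
    by rewrite hkR modnMDl modn_small //; clear -hd hmD hDK; lia.
  move=> r rK kr; rewrite /air_entry; cbv zeta; rewrite -/l.
  case/orP => [/andP [_ /eqP ee]|/orP [|]]; first by clear -ee kr; lia.
    case/hasP => i' _ /and4P [h1 h2 h3 /and4P [h4' h5 h6 /eqP h7]].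
    have ii : i' = i.
      case: (ltngtP i' i) => // hh.
        have := monoP K D (2*i').+2 (2*i) (i - i'.+1) ltac:(clear -hh; lia).
        rewrite -/e => H; clear -H h6 hk1; lia.
      have := monoP K D (2*i).+2 (2*i') (i' - i.+1) ltac:(clear -hh; lia).
      rewrite -/p => H; clear -H h5 hk2; lia.
    subst i'.
    rewrite -/m -/e in h3 h7.
    rewrite hkR modnMDl modn_small in h7 => //; clear -h7 h3; lia.
  case/hasP => i' _ /and4P [h1 h2 h3 /and3P [h4' h5 h6]].
  have hii : i' < i.
    rewrite ltnNge; apply/negP => hh.
    have := monoP K D (2*i).+2 (2*i').+2 (i' - i) ltac:(clear -hh; lia).
    rewrite -/p => H; clear -H h4' hk2; lia.
  have := monoP K D (2*i').+3 (2*i).+1 (i - i'.+1) ltac:(clear -hii; lia).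
  rewrite -/m => H; clear -H h3; lia.
have heK : e <= K - D by have := monoP K D 0 (2*i) i ltac:(clear; lia); rewrite lam0.
rewrite !mulrBl mul1r -!PoszM.
move: hkR hdiv; move: (b * m) (c * m) => X Y hkR hdiv.
clear -hkR hdiv hk1 kK hmD hd heK.
lia.
Qed.
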